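(* Let $Y\in\{0,1\}$, $\mathbf{B}\in\mathbb{R}^n$, and for $i=1,\dots,r$ let $Z_i\in\mathbb{R}$, $A_i\in\{0,1\}$. Let $\sigma(x)=1/(1+e^{-x})$. Assume: (C1) $\mathbf{p}(Y=1\mid\mathbf{b})=\sigma(\mathbf{w}^\top\mathbf{b}+t)$ for some $\mathbf{w}\in\mathbb{R}^n$, $t\in\mathbb{R}$; (C2) for all $\mathcal{I}\subseteq[r]$: $\mathbf{p}(\mathbf{A}_{\mathcal{I}}=\mathbf{1}\mid\mathbf{b},y)=\prod_{i\in\mathcal{I}}\mathbf{p}(A_i=1\mid\mathbf{b},y)$; (C3) for all $\mathcal{I}\subseteq[r]$: $\mathbf{p}(\mathbf{z}_{\mathcal{I}}\mid\mathbf{b},y,\mathbf{A}_{\mathcal{I}}=\mathbf{1})=\prod_{i\in\mathcal{I}}\mathbf{p}(z_i\mid\mathbf{b},y,A_i=1)$; (C4) there is a function $N(\mathbf{b})>0$ and $\mathbf{u}_i\in\mathbb{R}^n$, $\lambda_i\in\mathbb{R}$ with $\mathbf{p}(A_i=1\mid\mathbf{b},Y=1)=N(\mathbf{b})\sigma(\mathbf{u}_i^\top\mathbf{b}+\lambda_i)$ and $\mathbf{p}(A_i=1\mid\mathbf{b},Y=0)=N(\mathbf{b})-\mathbf{p}(A_i=1\mid\mathbf{b},Y=1)$; (C5) $(Z_i\mid\mathbf{b},y,A_i=1)\sim\mathcal{N}(\mathbf{v}_i^\top\mathbf{b}+\tau_i(y),\eta^2)$ for some $\mathbf{v}_i\in\mathbb{R}^n$,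 $\tau_i(0),\tau_i(1)\in\mathbb{R}$, $\eta>0$. Then for every $\mathcal{I}\subseteq[r]$, $$\frac{\mathbf{p}(Y=1\mid\mathbf{b},\mathbf{z}_{\mathcal{I}},\mathbf{A}_{\mathcal{I}}=\mathbf{1})}{\mathbf{p}(Y=0\mid\mathbf{b},\mathbf{z}_{\mathcal{I}},\mathbf{A}_{\mathcal{I}}=\mathbf{1})}=\exp\Big[\mathbf{w}^\top\mathbf{b}+t+\sum_{i\in\mathcal{I}}\big((\mathbf{u}_i-\boldsymbol\gamma_i)^\top\mathbf{b}+\beta_i z_i+\lambda_i+\theta_i\big)\Big],$$ where $\beta_i=\eta^{-2}(\tau_i(1)-\tau_i(0))$, $\boldsymbol\gamma_i=\beta_i\mathbf{v}_i$, and $\theta_i=\tfrac12\eta^{-2}(\tau_i(0)^2-\tau_i(1)^2)$. In particular, each such conditional distribution is of logistic-regression form.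
   Context: For a vector $\mathbf{v}$ and $\mathcal{I}\subseteq[r]=\{1,\dots,r\}$, $\mathbf{v}_{\mathcal{I}}$ is the subvector with indices in $\mathcal{I}$; $\mathbf{A}_{\mathcal{I}}=\mathbf{1}$ means $A_i=1$ for all $i\in\mathcal{I}$ (other features marginalized). $Z_i$ is only observed when $A_i=1$. *)

(* Defs.v *)
From HB Require Import structures.
From mathcomp Require Import all_boot all_order all_algebra.
From mathcomp Require Import all_classical all_reals.
From mathcomp Require Import all_analysis.
Set Implicit Arguments. Unset Strict Implicit. Unset Printing Implicit Defensive.
Import Order.TTheory GRing.Theory Num.Theory.
Local Open Scope ring_scope.

Definition sigmoid {R : realType} (x : R) : R := (1 + expR (- x))^-1.

Definition dotv {R : realType} {n : nat} (u b : 'rV[R]_n) : R :=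
  \sum_(j < n) u 0 j * b 0 j.

(* Joint (conditional on b) density of (Y = y, A_I = 1, z_I):
     p(y | b) * p(A_I = 1 | b, y) * p(z_I | b, y, A_I = 1),
   where pY b y = p(Y=y|b), pA I b y = p(A_I = 1 | b, y),
   pZ I b y z = p(z_I | b, y, A_I = 1) (z : 'I_r -> R, only z_I relevant). *)
Definition joint {R : realType} {n r : nat}
  (pY : 'rV[R]_n -> bool -> R)
  (pA : {set 'I_r} -> 'rV[R]_n -> bool -> R)
  (pZ : {set 'I_r} -> 'rV[R]_n -> bool -> ('I_r -> R) -> R)
  (I : {set 'I_r}) (b : 'rV[R]_n) (z : 'I_r -> R) (y : bool) : R :=
  pY b y * pA I b y * pZ I b y z.

Definition posterior {R : realType} {n r : nat}
  (pY : 'rV[R]_n -> bool -> R)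
  (pA : {set 'I_r} -> 'rV[R]_n -> bool -> R)
  (pZ : {set 'I_r} -> 'rV[R]_n -> bool -> ('I_r -> R) -> R)
  (I : {set 'I_r}) (b : 'rV[R]_n) (z : 'I_r -> R) (y : bool) : R :=
  joint pY pA pZ I b z y / (joint pY pA pZ I b z false + joint pY pA pZ I b z true).

(* Main.v *)
Require Import Defs.
From HB Require Import structures.
From mathcomp Require Import all_boot all_order all_algebra.
From mathcomp Require Import all_classical all_reals.
From mathcomp Require Import all_analysis.
Import Order.TTheory GRing.Theory Num.Theory.
From mathcomp Require Import ring lra.
Local Open Scope ring_scope.

Section H.
Variable R : realType.

Lemma sig_ratio (a : R) : sigmoid a = expR a * (1 - sigmoid a) /\ 0 < 1 - sigmoid a.
Proof.
rewrite /sigmoid.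
have h1 : 0 < 1 + expR (- a) by rewrite addr_gt0 ?expR_gt0.
have -> : 1 - (1 + expR (- a))^-1 = expR (-a) / (1 + expR (- a)).
  by field; rewrite gt_eqF.
split; last by rewrite divr_gt0 ?expR_gt0.
rewrite mulrA -expRD addrN expR0 mul1r. by [].
Qed.

Lemma npdf_ratio (m0 m1 eta x : R) : 0 < eta ->
  normal_pdf m1 eta x = expR ((m1 - m0) / eta ^+ 2 * x - (m1 - m0) / eta ^+ 2 * m0
     + (m0 ^+ 2 - m1 ^+ 2 + (m1 - m0) * m0 *+ 2) / (eta ^+ 2 *+ 2) - 0) * normal_pdf m0 eta x
  /\ 0 < normal_pdf m0 eta x.
Proof.
move=> he; have e0 : eta != 0 by rewrite gt_eqF.
rewrite !normal_pdfE //; split; last first.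
  by rewrite mulr_gt0 ?normal_peak_gt0 ?expR_gt0.
rewrite /normal_fun mulrCA -expRD; congr (_ * expR _).
by field.
Qed.

Lemma dotv_lin n (u v b : 'rV[R]_n) (c : R) :
  dotv (u - c *: v) b = dotv u b - c * dotv v b.
Proof.
rewrite /dotv mulr_sumr -sumrN -big_split /=; apply: eq_bigr => j _.
by rewrite !mxE mulrDl mulNr mulrA.
Qed.

Lemma prod_ratio (T : finType) (P : {set T}) (f g k : T -> R) :
  (forall i, f i = expR (k i) * g i) ->
  \prod_(i in P) f i = expR (\sum_(i in P) k i) * \prod_(i in P) g i.
Proof.
move=> h; rewrite expR_sum -big_split /=; exact: eq_bigr.
Qed.

Lemma prod_gt0 (T : finType) (P : {set T}) (g : T -> R) :
  (forall i, 0 < g i) -> 0 < \prod_(i in P) g i.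
Proof. move=> h; apply: prodr_gt0 => i _; exact: h. Qed.
End H.
Theorem mainTheorem3 (R : realType) (n r : nat)
  (pY : 'rV[R]_n -> bool -> R)
  (pA : {set 'I_r} -> 'rV[R]_n -> bool -> R)
  (pZ : {set 'I_r} -> 'rV[R]_n -> bool -> ('I_r -> R) -> R)
  (w : 'rV[R]_n) (t : R)
  (N : 'rV[R]_n -> R) (u : 'I_r -> 'rV[R]_n) (lam : 'I_r -> R)
  (v : 'I_r -> 'rV[R]_n) (tau : 'I_r -> bool -> R) (eta : R) :
  (* Y is binary *)
  (forall b, pY b false = 1 - pY b true) ->
  (* (C1) *)
  (forall b, pY b true = sigmoid (dotv w b + t)) ->
  (* (C2) *)
  (forall I b y, pA I b y = \prod_(i in I) pA [set i] b y) ->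
  (* (C3) *)
  (forall I b y z, pZ I b y z = \prod_(i in I) pZ [set i] b y z) ->
  (* (C4) *)
  (forall b, 0 < N b) ->
  (forall i b, pA [set i] b true = N b * sigmoid (dotv (u i) b + lam i)) ->
  (forall i b, pA [set i] b false = N b - pA [set i] b true) ->
  (* (C5) *)
  0 < eta ->
  (forall i b y z, pZ [set i] b y z = normal_pdf (dotv (v i) b + tau i y) eta (z i)) ->
  forall (I : {set 'I_r}) (b : 'rV[R]_n) (z : 'I_r -> R),
    let beta i := (tau i true - tau i false) / eta ^+ 2 in
    let gamma i := beta i *: v i in
    let theta i := (tau i false ^+ 2 - tau i true ^+ 2) / (eta ^+ 2 *+ 2) in
    let s := dotv w b + t +
      \sum_(i in I) (dotv (u i - gamma i) b + beta i * z i + lam i + theta i) in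
    posterior pY pA pZ I b z true / posterior pY pA pZ I b z false = expR s
    /\ posterior pY pA pZ I b z true = sigmoid s.
Proof.
move=> hY0 hY1 hA hZ hN hA1 hA0 he hZ1 I b z beta gamma theta s.
set a := dotv w b + t.
set c := fun i => dotv (u i) b + lam i.
set m0 := fun i => dotv (v i) b + tau i false.
set m1 := fun i => dotv (v i) b + tau i true.
set k := fun i => (m1 i - m0 i) / eta ^+ 2 * z i - (m1 i - m0 i) / eta ^+ 2 * m0 i
     + (m0 i ^+ 2 - m1 i ^+ 2 + (m1 i - m0 i) * m0 i *+ 2) / (eta ^+ 2 *+ 2) - 0.
have [Y1 Y0] := (@sig_ratio R a).
have hYt : pY b true = expR a * pY b false by rewrite hY0 hY1.
have hYf : 0 < pY b false by rewrite hY0 hY1.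
have hAt i : pA [set i] b true = expR (c i) * pA [set i] b false.
  have [h1 h2] := (@sig_ratio R (c i)).
  by rewrite hA0 hA1 -{2}(mulr1 (N b)) -mulrBr mulrCA -h1.
have hAf i : 0 < pA [set i] b false.
  have [h1 h2] := (@sig_ratio R (c i)).
  by rewrite hA0 hA1 -{1}(mulr1 (N b)) -mulrBr mulr_gt0.
have hZt i : pZ [set i] b true z = expR (k i) * pZ [set i] b false z.
  by rewrite !hZ1; case: ((@npdf_ratio R (m0 i)) (m1 i) eta (z i) he).
have hZf i : 0 < pZ [set i] b false z.
  by rewrite !hZ1; case: ((@npdf_ratio R (m0 i)) (m1 i) eta (z i) he).
have hs : s = a + (\sum_(i in I) c i + \sum_(i in I) k i).
  rewrite /s -big_split /=; congr (_ + _); apply: eq_bigr => i _.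
  rewrite /gamma dotv_lin /c /k /m0 /m1 /beta /theta.
  field; by rewrite gt_eqF // exprn_gt0.
have J1 : joint pY pA pZ I b z true = expR s * joint pY pA pZ I b z false.
  rewrite /joint hA hZ (hA I) (hZ I) hYt (@prod_ratio R _ I _ _ _ hAt) (@prod_ratio R _ I _ _ _ hZt).
  rewrite hs !expRD; ring.
have J0 : 0 < joint pY pA pZ I b z false.
  rewrite /joint hA hZ !mulr_gt0 //; exact: prod_gt0.
have D : 0 < joint pY pA pZ I b z false + joint pY pA pZ I b z true.
  by rewrite J1 addr_gt0 // mulr_gt0 // expR_gt0.
rewrite /posterior J1; split.
  field; rewrite ?gt_eqF //; rewrite -J1; exact: D.
rewrite /sigmoid expRN.
have es := expR_gt0 s.
field; rewrite (gt_eqF es) (gt_eqF (addr_gt0 es ltr01)) /=.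
by rewrite gt_eqF // addr_gt0 // mulr_gt0.
Qed.
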